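(* Let $\lambda,\mu$ be partitions of $n$. Then: (1) $\mathbf{E}_\lambda=\mathbf{E}_\mu \iff Z_{\mathbf{E}_\lambda}=Z_{\mathbf{E}_\mu}\iff\lambda=\mu$; (2) $\mathbf{C}_\lambda=\mathbf{C}_\mu \iff Z_{\mathbf{C}_\lambda}=Z_{\mathbf{C}_\mu}\iff\lambda=\mu$; (3) $\mathbf{K}_\lambda=\mathbf{K}_\mu \iff Z_{\mathbf{K}_\lambda}=Z_{\mathbf{K}_\mu}\iff\lambda=\mu$; (4) consequently, in each of the three families $\{\mathbf{E}_\alpha\}_{\alpha\vdash n}$, $\{\mathbf{C}_\alpha\}_{\alpha\vdash n}$, $\{\mathbf{K}_\alpha\}_{\alpha\vdash n}$ the number of distinct isomorphism classes (and of distinct cycle index series) equals $p(n)$, the number of partitions of $n$.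
   Context: Species are functors from finite sets with bijections to finite sets; equality means natural isomorphism. For $H\le S_n$, $X^n/H$ is the species with $(X^n/H)[U]=\{\lambda H:\lambda:[n]\to U\text{ bijection}\}$, transport by left composition. The cycle index series of a species $F$ is $Z_F=\sum_{n\ge0}\frac1{n!}\sum_{\sigma\in S_n}|\mathrm{Fix}\,F[\sigma]|\,p_{\lambda(\sigma)}$, with $\lambda(\sigma)$ the cycle type and $p_\lambda$ power sums. For $\alpha\vdash n$: $\mathbf{E}_\alpha=X^n/S_\alpha$ with $S_\alpha=S_{\alpha_1}\times\cdots\times S_{\alpha_k}$ the Young subgroup; $\mathbf{C}_\alpha=X^n/\langle\sigma_\alpha\rangle$ where $\sigma_\alpha$ is the standard permutation filling cycles of lengths $\alpha_1,\alpha_2,\ldots$ with $1,\ldots,n$ in increasing order; and, writing $\alpha=(i_1^{\alpha_1},\ldots,i_m^{\alpha_m})$ with distinct part sizes $i_j$ of multiplicities $\alpha_j$, $\mathbf{K}_\alpha=X^n/G_\alpha$ where $G_\alpha=\langle\sigma_{i_m^{\alpha_m}}\rangle\times\cdots\times\langle\sigma_{i_1^{\alpha_1}}\rangle$, the factors being cyclic groups generated by standard permutations of shape $i_j^{\alpha_j}$ acting on consecutive disjoint blocks of $[n]$ (equivalently $\mathbf{K}_\alpha$ is the species product of the $\mathbf{C}_{i_j^{\alpha_j}}$). *)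

(* Defs.v *)
From HB Require Import structures.
From mathcomp Require Import all_boot all_order all_algebra all_fingroup.
From mathcomp Require Import mpoly.
Set Implicit Arguments. Unset Strict Implicit. Unset Printing Implicit Defensive.

Import GRing.Theory.

Record species := Species {
  sp_obj : finType -> finType;
  sp_tr : forall (U V : finType) (f : U -> V), bijective f -> sp_obj U -> sp_obj V;
  sp_tr_id : forall (U : finType) (p : bijective (@id U)) x, sp_tr p x = x;
  sp_tr_comp : forall (U V W : finType) (f : U -> V) (g : V -> W)
      (pf : bijective f) (pg : bijective g) (pgf : bijective (g \o f)) x,
      sp_tr pgf x = sp_tr pg (sp_tr pf x)
}.

(* Equality of species = natural isomorphism. *)
Definition sp_iso (F G : species) : Prop :=
  exists a : forall U : finType, sp_obj F U -> sp_obj G U,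
    (forall U, bijective (a U)) /\
    (forall (U V : finType) (f : U -> V) (pf : bijective f) (x : sp_obj F U),
        a V (sp_tr pf x) = sp_tr pf (a U x)).

Section Quotient.
Variables (n : nat) (H : {set 'S_n}).

(* C is a left coset  lambda H  with lambda : [n] -> U a bijection. *)
Definition is_coset (U : finType) (C : {set {ffun 'I_n -> U}}) : bool :=
  [exists l : {ffun 'I_n -> U},
     [&& injectiveb l, [forall u, exists i, l i == u]
       & C == [set [ffun i => l (h i)] | h : 'S_n in H]]].

Definition coset_obj (U : finType) : finType :=
  {C : {set {ffun 'I_n -> U}} | is_coset C}.

Definition coset_img (U V : finType) (f : U -> V) (C : {set {ffun 'I_n -> U}}) :
  {set {ffun 'I_n -> V}} := [set [ffun i => f (g i)] | g : {ffun 'I_n -> U} in C].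

Lemma coset_img_coset (U V : finType) (f : U -> V) (pf : bijective f)
  (C : coset_obj U) : is_coset (coset_img f (val C)).
Proof.
case: C => C /= /existsP[l /and3P[/injectiveP linj /forallP lsurj /eqP ->]].
apply/existsP; exists [ffun i => f (l i)]; apply/and3P; split.
- apply/injectiveP => i j; rewrite !ffunE => /(bij_inj pf); exact: linj.
- apply/forallP => v; case: pf => g fK gK.
  have /existsP[i /eqP li] := lsurj (g v).
  by apply/existsP; exists i; rewrite ffunE li gK.
- rewrite /coset_img -imset_comp; apply/eqP/eq_imset => h /=.
  by apply/ffunP => i; rewrite !ffunE.
Qed.

Definition coset_tr (U V : finType) (f : U -> V) (pf : bijective f)
  (C : coset_obj U) : coset_obj V :=
  exist _ (coset_img f (val C)) (coset_img_coset pf C).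

Lemma coset_tr_id (U : finType) (p : bijective (@id U)) x : coset_tr p x = x.
Proof.
apply: val_inj; rewrite /= /coset_img -[RHS]imset_id.
by apply: eq_imset => g; apply/ffunP => i; rewrite ffunE.
Qed.

Lemma coset_tr_comp (U V W : finType) (f : U -> V) (g : V -> W)
  (pf : bijective f) (pg : bijective g) (pgf : bijective (g \o f)) x :
  coset_tr pgf x = coset_tr pg (coset_tr pf x).
Proof.
apply: val_inj; rewrite /= /coset_img -imset_comp.
by apply: eq_imset => h; apply/ffunP => i; rewrite !ffunE.
Qed.

Definition Xquot : species := Species coset_tr_id coset_tr_comp.
End Quotient.

(* Cycle index series.  The variable p_k (k >= 1) of the degree-m      *)
(* component is 'X_(k-1) in {mpoly rat[m.+1]}; Z_F is the sequence of  *)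
(* its homogeneous components (indexed by m).                          *)
Lemma perm_bijective (T : finType) (s : {perm T}) : bijective (fun x => s x).
Proof. by exists (fun x => s^-1%g x) => x; rewrite ?permK ?permKV. Qed.

Definition fixcount (F : species) (m : nat) (s : 'S_m) : nat :=
  #|[set x : sp_obj F 'I_m | sp_tr (perm_bijective s) x == x]|.

Definition power_sum_mono (m : nat) (s : 'S_m) : {mpoly rat[m.+1]} :=
  \prod_(c in porbits s) 'X_(inord (#|c|.-1)).

Definition cycle_index (F : species) (m : nat) : {mpoly rat[m.+1]} :=
  \sum_(s : 'S_m) ((fixcount F s)%:R / (m`!)%:R) *: power_sum_mono s.

Definition Zeq (F G : species) : Prop := forall m, cycle_index F m = cycle_index G m.

Definition is_partition (n : nat) (a : seq nat) : bool :=
  [&& sorted geq a, all (fun x => 0 < x) a & sumn a == n].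

(* index of the block (of consecutive integers, block k of size a_k)   *)
(* containing i (0-indexed)                                             *)
Definition blk (a : seq nat) (i : nat) : nat :=
  count (fun k => sumn (take k.+1 a) <= i) (iota 0 (size a)).

(* the standard permutation sigma_a on nat: cycles (1..a1)(a1+1..)...   *)
Definition stdfun (a : seq nat) (i : nat) : nat :=
  let b := blk a i in
  if i.+1 < sumn (take b.+1 a) then i.+1 else sumn (take b a).

(* a permutation given by a function (the function is a permutation in  *)
(* every use below; the fallback 1 is never reached)                    *)
Definition perm_of (n : nat) (f : nat -> nat) : 'S_n :=
  odflt 1%g [pick s : 'S_n | [forall i, val (s i) == f (val i)]].

Definition std_perm (n : nat) (a : seq nat) : 'S_n := perm_of n (stdfun a).

Definition std_perm_on (n : nat) (a : seq nat) (v : nat) : 'S_n :=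
  perm_of n (fun i => if nth 0 a (blk a i) == v then stdfun a i else i).

Definition young (n : nat) (a : seq nat) : {set 'S_n} :=
  [set s : 'S_n | [forall i : 'I_n, blk a (s i) == blk a i]].

Definition Kgroup (n : nat) (a : seq nat) : {set 'S_n} :=
  <<[set std_perm_on n a (val v) | v : 'I_n.+1 & val v \in a]>>%g.

Definition Esp (n : nat) (a : seq nat) : species := Xquot (young n a).
Definition Csp (n : nat) (a : seq nat) : species := Xquot <[std_perm n a]>%g.
Definition Ksp (n : nat) (a : seq nat) : species := Xquot (Kgroup n a).

Definition num_classes (T : Type) (R : T -> T -> Prop) (m : nat) (F : 'I_m -> T)
  (k : nat) : Prop :=
  exists rep : 'I_k -> 'I_m,
    (forall i j, R (F (rep i)) (F (rep j)) -> i = j) /\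
    (forall j, exists i, R (F j) (F (rep i))).

(* Main.v *)
Require Import Defs.
From mathcomp Require Import all_boot all_order all_algebra all_fingroup.
From mathcomp Require Import mpoly.
From mathcomp Require Import zify.
Set Implicit Arguments. Unset Strict Implicit.
Import GRing.Theory Num.Theory.

Notation PS a k := (sumn (take k a)).

Lemma PS_mono a j k : j <= k -> PS a j <= PS a k.
Proof.
elim: a j k => [|x a IH] [|j] [|k] //= h; rewrite ?leq_add2l; auto.
Qed.

Lemma PS_S a k : k < size a -> PS a k.+1 = PS a k + nth 0 a k.
Proof. by move=> h; rewrite (take_nth 0 h) sumn_rcons. Qed.

Lemma blk_eq a i k : k < size a -> PS a k <= i < PS a k.+1 -> blk a i = k.
Proof.
move=> ka /andP[h1 h2]; rewrite /blk.
have -> : size a = k + (size a - k) by lia.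
rewrite iotaD count_cat add0n.
rewrite (eq_in_count (a2 := predT)); last first.
  move=> j; rewrite mem_iota => /andP[_ jk] /=.
  by apply: leq_trans h1; apply: PS_mono.
rewrite count_predT size_iota.
rewrite (eq_in_count (a2 := pred0)); last first.
  move=> j; rewrite mem_iota => /andP[kj _] /=.
  apply/negbTE; rewrite -ltnNge; apply: (leq_trans h2); exact: PS_mono.
by rewrite count_pred0 addn0.
Qed.

Lemma blk_ex a i : i < sumn a -> exists2 k, k < size a & PS a k <= i < PS a k.+1.
Proof.
elim: a i => [|x a IH] i //= hi.
case: (ltnP i x) => hx; first by exists 0 => //=; lia.
have [k k1 k2] : exists2 k, k < size a & PS a k <= i - x < PS a k.+1 by apply: IH; lia.
by exists k.+1 => //=; lia.
Qed.

Lemma blk_spec a i : i < sumn a ->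
  blk a i < size a /\ PS a (blk a i) <= i < PS a (blk a i).+1.
Proof. by move=> /blk_ex[k k1 k2]; rewrite (blk_eq k1 k2). Qed.

Lemma PS_size a : PS a (size a) = sumn a.
Proof. by rewrite take_size. Qed.

Lemma stdfun_spec a i : i < sumn a ->
  blk a (stdfun a i) = blk a i /\ stdfun a i < sumn a.
Proof.
move=> hi; have [b1 /andP[b2 b3]] := blk_spec hi.
have hS : PS a (blk a i).+1 <= sumn a by rewrite -(PS_size a); apply: PS_mono.
rewrite /stdfun; case: ifP => h.
  split; last by lia.
  by apply: blk_eq => //; lia.
split; last by lia.
by apply: blk_eq => //; lia.
Qed.

Lemma stdfun_inj a i j : i < sumn a -> j < sumn a -> stdfun a i = stdfun a j -> i = j.
Proof.
move=> hi hj e.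
have [e1 _] := stdfun_spec hi; have [e2 _] := stdfun_spec hj.
have ebl : blk a i = blk a j by rewrite -e1 -e2 e.
have [_ /andP[i1 i2]] := blk_spec hi; have [_ /andP[j1 j2]] := blk_spec hj.
move: e; rewrite /stdfun -ebl.
rewrite -ebl in j1 j2.
case: ifP => hi'; case: ifP => hj'; try lia.
Qed.

Definition maskf a v i := if nth 0 a (blk a i) == v then stdfun a i else i.

Lemma maskf_spec a v i : i < sumn a ->
  blk a (maskf a v i) = blk a i /\ maskf a v i < sumn a.
Proof. by rewrite /maskf; case: ifP => _ // /stdfun_spec. Qed.

Lemma maskf_inj a v i j : i < sumn a -> j < sumn a -> maskf a v i = maskf a v j -> i = j.
Proof.
move=> hi hj e.
have [e1 _] := maskf_spec v hi; have [e2 _] := maskf_spec v hj.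
have ebl : blk a i = blk a j by rewrite -e1 -e2 e.
move: e; rewrite /maskf -ebl; case: ifP => _ //; exact: stdfun_inj.
Qed.

Lemma perm_ofE n (f : nat -> nat) : (forall i : 'I_n, f i < n) ->
  (forall i j : 'I_n, f i = f j -> i = j) -> forall i : 'I_n, val (Defs.perm_of n f i) = f i.
Proof.
move=> fr finj.
pose g := [ffun i : 'I_n => Ordinal (fr i)].
have ginj : injective g.
  by move=> i j; rewrite !ffunE => /(congr1 val) /= /finj.
rewrite /Defs.perm_of; case: pickP => [s /forallP hs i | hn i].
  by rewrite /= (eqP (hs i)).
have := hn (perm ginj); move=> /negbT /forallPn [j].
by rewrite permE ffunE /= eqxx.
Qed.

Lemma iter_stdfun a i t : i < sumn a ->
  iter t (stdfun a) i = PS a (blk a i) + (i - PS a (blk a i) + t) %% nth 0 a (blk a i).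
Proof.
move=> hi; have [b1 /andP[b2 b3]] := blk_spec hi.
set b := blk a i in b1 b2 b3 *.
have hS := PS_S b1; set d := nth 0 a b in hS *.
have d0 : 0 < d by lia.
elim: t => [|t IH]; first by rewrite addn0 modn_small //=; lia.
rewrite iterS IH.
set r := (i - PS a b + t) %% d.
have rd : r < d by rewrite ltn_mod.
have hb : blk a (PS a b + r) = b by apply: blk_eq => //; lia.
have -> : (i - PS a b + t.+1) %% d = (r + 1) %% d by rewrite /r modnDml addn1 addnS.
rewrite /stdfun hb hS.
case: ifP => h.
  by rewrite modn_small; lia.
have -> : r + 1 = d by lia.
by rewrite modnn addn0.
Qed.

Section Blocks.
Variables (n : nat) (a : seq nat).

Definition Bof (i : 'I_n) : {set 'I_n} := [set j : 'I_n | blk a j == blk a i].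
Definition blocks : {set {set 'I_n}} := [set Bof i | i : 'I_n].
Definition pres (h : 'S_n) := forall i : 'I_n, blk a (h i) = blk a i.

Lemma Bof_eq (x i : 'I_n) : blk a x = blk a i -> Bof x = Bof i.
Proof. by move=> e; apply/setP => j; rewrite !inE e. Qed.

Lemma presX (h : 'S_n) t (i : 'I_n) : pres h -> blk a ((h ^+ t)%g i) = blk a i.
Proof.
move=> ph; rewrite permX; elim: t => //= t IH; by rewrite ph.
Qed.

Lemma porbit_sub (h : 'S_n) (i : 'I_n) : pres h -> porbit h i \subset Bof i.
Proof.
move=> ph; apply/subsetP => j /porbitP[t ->]; by rewrite inE presX.
Qed.

Lemma val_iter (h : 'S_n) (f : nat -> nat) t i :
  (forall i : 'I_n, val (h i) = f i) -> val (iter t h i) = iter t f i.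
Proof. by move=> hf; elim: t => //= t <-; rewrite hf. Qed.

Hypothesis sa : sumn a = n.

Lemma pres_std (h : 'S_n) : (forall i : 'I_n, val (h i) = stdfun a i) -> pres h.
Proof.
move=> hf i; rewrite hf; have hi : i < sumn a by rewrite sa.
by case: (stdfun_spec hi).
Qed.

Lemma porbit_std (h : 'S_n) (i : 'I_n) : (forall i : 'I_n, val (h i) = stdfun a i) -> porbit h i = Bof i.
Proof.
move=> hf; apply/eqP; rewrite eqEsubset porbit_sub /=; last exact: pres_std.
apply/subsetP => j; rewrite inE => /eqP ej.
have hi : i < sumn a by rewrite sa.
have hj : j < sumn a by rewrite sa.
have [b1 /andP[b2 b3]] := blk_spec hi.
have [_ /andP[c2 c3]] := blk_spec hj.
rewrite ej in c2 c3.
have hS := PS_S b1.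
set d := nth 0 a (blk a i) in hS.
apply/porbitP; exists (j + d - i); apply: val_inj.
rewrite permX (val_iter _ _ hf) iter_stdfun // -/d.
have -> : i - PS a (blk a i) + (j + d - i) = (j - PS a (blk a i)) + d by lia.
by rewrite modnDr modn_small /=; lia.
Qed.

Lemma porbits_std (h : 'S_n) : (forall i : 'I_n, val (h i) = stdfun a i) -> porbits h = blocks.
Proof. by move=> hf; apply: eq_imset => i; exact: porbit_std. Qed.

Definition phi (c : {set 'I_n}) : {set 'I_n} := \bigcup_(x in c) Bof x.

Lemma phi_porbit (h : 'S_n) (i : 'I_n) : pres h -> phi (porbit h i) = Bof i.
Proof.
move=> ph; apply/eqP; rewrite eqEsubset; apply/andP; split.
  apply/bigcupsP => x /porbitP[t ->]; rewrite (Bof_eq (presX _ _ ph)).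
  exact: subxx.
by apply: (bigcup_max i) => //; exact: porbit_id.
Qed.

Lemma blocks_phi (h : 'S_n) : pres h -> blocks = phi @: porbits h.
Proof.
move=> ph; rewrite /porbits -imset_comp; apply: eq_imset => i /=.
by rewrite phi_porbit.
Qed.

Lemma blocks_le (h : 'S_n) : pres h -> #|blocks| <= #|porbits h|.
Proof. by move=> ph; rewrite (blocks_phi ph) leq_imset_card. Qed.

Lemma blocks_eq (h : 'S_n) : pres h -> #|porbits h| = #|blocks| -> porbits h = blocks.
Proof.
move=> ph e.
have /imset_injP pinj : #|phi @: porbits h| == #|porbits h|.
  by rewrite -blocks_phi // e.
apply: eq_imset => i; apply/eqP; rewrite eqEsubset porbit_sub //=.
apply/subsetP => j; rewrite inE => /eqP ej.
have : porbit h j = porbit h i.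
  apply: pinj; rewrite ?imset_f //.
  by rewrite !phi_porbit // (Bof_eq ej).
by move=> <-; exact: porbit_id.
Qed.

End Blocks.

Section Expo.
Variable n : nat.

Definition expo (s : 'S_n) : 'X_{1..n.+1} :=
  (\sum_(c in porbits s) U_(inord (#|c|.-1)))%MM.

Lemma psm_expo (s : 'S_n) : power_sum_mono s = 'X_[expo s].
Proof.
rewrite /power_sum_mono /expo.
by rewrite (big_morph (fun m => ('X_[m] : {mpoly rat[n.+1]})) (@mpolyXD _ _) (@mpolyX0 _ _)).
Qed.

Lemma mdeg_expo (s : 'S_n) : mdeg (expo s) = #|porbits s|.
Proof.
rewrite /expo mdeg_sum -sum1_card; apply: eq_bigr => c _; exact: mdeg1.
Qed.

Lemma expo_conj (s h p : 'S_n) : (forall i, s (p i) = p (h i)) -> expo s = expo h.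
Proof.
move=> e.
have eX t i : (s ^+ t)%g (p i) = p ((h ^+ t)%g i).
  by rewrite !permX; elim: t => //= t ->; rewrite e.
have eo i : porbit s (p i) = p @: porbit h i.
  apply/setP => y; apply/porbitP/imsetP.
    by move=> [t ->]; exists ((h ^+ t)%g i); rewrite ?eX // mem_porbit.
  by move=> [z /porbitP[t ->] ->]; exists t; rewrite eX.
have eos : porbits s = (fun c : {set 'I_n} => p @: c) @: porbits h.
  rewrite /porbits -imset_comp; apply/setP => c; apply/imsetP/imsetP.
    move=> [y _ ->]; exists ((p^-1)%g y) => //=; by rewrite -eo permKV.
  by move=> [y _ ->]; exists (p y) => //=; rewrite eo.
rewrite /expo eos big_imset /=; last by move=> c1 c2 _ _; apply: imset_inj; exact: perm_inj.
by apply: eq_bigr => c _; rewrite card_imset //; exact: perm_inj.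
Qed.

Definition eb (a : seq nat) : 'X_{1..n.+1} :=
  (\sum_(B in blocks n a) U_(inord (#|B|.-1)))%MM.

Lemma expo_blocks a (h : 'S_n) : porbits h = blocks n a -> expo h = eb a.
Proof. by rewrite /expo /eb => ->. Qed.

Lemma mdeg_eb a : mdeg (eb a) = #|blocks n a|.
Proof.
rewrite /eb mdeg_sum -sum1_card; apply: eq_bigr => c _; exact: mdeg1.
Qed.

End Expo.

Lemma mem_le_sumn x (a : seq nat) : x \in a -> x <= sumn a.
Proof.
elim: a => //= y a IH; rewrite inE => /orP[/eqP -> | /IH]; lia.
Qed.

Section Part.
Variables (n : nat) (a : seq nat).
Hypothesis pa : is_partition n a.

Lemma pa_sum : sumn a = n.
Proof. by case/and3P: pa => _ _ /eqP. Qed.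

Lemma pa_pos x : x \in a -> 0 < x.
Proof. by case/and3P: pa => _ /allP h _; exact: h. Qed.

Lemma pa_le x : x \in a -> x <= n.
Proof. by rewrite -pa_sum; exact: mem_le_sumn. Qed.

Lemma nth_pos k : k < size a -> 0 < nth 0 a k.
Proof. by move=> h; apply: pa_pos; exact: mem_nth. Qed.

Lemma PS_lt k : k < size a -> PS a k < n.
Proof.
move=> h; have := PS_S h; have := nth_pos h.
have : PS a k.+1 <= PS a (size a) by exact: PS_mono.
rewrite PS_size pa_sum; lia.
Qed.

Lemma blk_PS k : k < size a -> blk a (PS a k) = k.
Proof. by move=> h; apply: blk_eq => //; have := PS_S h; have := nth_pos h; lia. Qed.

Definition Bk (k : 'I_(size a)) : {set 'I_n} := [set j : 'I_n | blk a j == k].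

Lemma blocks_Bk : blocks n a = [set Bk k | k : 'I_(size a)].
Proof.
apply/setP => B; apply/imsetP/imsetP => [[i _ ->] | [k _ ->]].
  have hi : i < sumn a by rewrite pa_sum.
  have [b1 _] := blk_spec hi.
  by exists (Ordinal b1) => //; apply/setP => j; rewrite !inE.
exists (Ordinal (PS_lt (ltn_ord k))) => //; apply/setP => j.
by rewrite !inE /= blk_PS.
Qed.

Lemma Bk_inj : injective Bk.
Proof.
move=> k1 k2 e; apply: val_inj.
have : Ordinal (PS_lt (ltn_ord k1)) \in Bk k1 by rewrite inE /= blk_PS.
by rewrite e inE /= blk_PS // => /eqP.
Qed.

Lemma card_Bk k : #|Bk k| = nth 0 a k.
Proof.
rewrite -sum1_card big_mkcond /=.
rewrite (eq_bigr (fun j : 'I_n => nat_of_bool (blk a j == k))); last first.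
  by move=> j _; rewrite inE; case: (_ == _).
rewrite -(big_mkord xpredT (fun j => nat_of_bool (blk a j == k))).
have hk := ltn_ord k; have hS := PS_S hk; have hp := nth_pos hk.
have hn : PS a k.+1 <= n by rewrite -pa_sum -(PS_size a); exact: PS_mono.
rewrite (big_cat_nat _ (n := PS a k)) //=; last lia.
rewrite (big_cat_nat _ (m := PS a k) (n := PS a k.+1)) //=; last lia.
rewrite big1_seq; last first.
  move=> j; rewrite mem_index_iota => /andP[_ hj].
  have hjs : j < sumn a by rewrite pa_sum; lia.
  have [_ /andP[c1 c2]] := blk_spec hjs.
  case: eqP => // ek; rewrite ek in c1 c2; lia.
rewrite add0n [X in _ + X]big1_seq; last first.
  move=> j; rewrite mem_index_iota => /andP[hj hj2].
  have hjs : j < sumn a by rewrite pa_sum; lia.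
  have [_ /andP[c1 c2]] := blk_spec hjs.
  case: eqP => // ek; rewrite ek in c1 c2; lia.
rewrite addn0 (eq_big_nat _ _ (F2 := fun _ => 1)); last first.
  move=> j /andP[j1 j2]; rewrite (blk_eq hk) ?j1 ?j2 ?eqxx //=.
rewrite sum_nat_const_nat; lia.
Qed.

Lemma eb_coord (x : 'I_n.+1) : (eb n a) x = count (pred1 x.+1) a.
Proof.
rewrite /eb blocks_Bk big_imset /=; last by move=> ? ? _ _; exact: Bk_inj.
rewrite mnm_sumE.
under eq_bigr do rewrite mnm1E card_Bk.
rewrite -(big_mkord xpredT (fun k => nat_of_bool (inord (nth 0 a k).-1 == x))) -(big_nth 0 xpredT (fun y => nat_of_bool (inord y.-1 == x))).
rewrite (eq_big_seq (fun y => nat_of_bool (y == x.+1))); last first.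
  move=> y ya; have := pa_pos ya; have := pa_le ya => h1 h2.
  congr nat_of_bool; apply/eqP/eqP => [<- | ->]; rewrite ?inordK; try lia.
  by apply: val_inj; rewrite /= inordK.
elim: (a) => [|y s IH]; first by rewrite big_nil.
by rewrite big_cons IH.
Qed.

Lemma pa_count0 v : (v == 0) || (n < v) -> count_mem v a = 0.
Proof.
move=> h; apply/count_memPn; apply/negP => va.
have := pa_pos va; have := pa_le va; case/orP: h => [/eqP|]; lia.
Qed.

End Part.

Lemma eb_eq n l m : is_partition n l -> is_partition n m -> eb n l = eb n m -> l = m.
Proof.
move=> pl pm e.
have cnt v : count_mem v l = count_mem v m.
  case: (boolP ((v == 0) || (n < v))) => h.
    by rewrite (pa_count0 pl h) (pa_count0 pm h).
  have hv : v.-1 < n.+1 by lia.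
  have := eb_coord pl (Ordinal hv); rewrite e eb_coord //=.
  by have -> : v.-1.+1 = v by lia.
apply: (sorted_eq (leT := geq)).
- by move=> x y z; lia.
- by move=> x y /andP[]; lia.
- by case/and3P: pl.
- by case/and3P: pm.
by apply/allP => v _; rewrite /= cnt.
Qed.


Section Fix.
Variables (n : nat) (H : {group 'S_n}).

Lemma fix_pos (h0 : 'S_n) : h0 \in H -> 0 < fixcount (Xquot H) h0.
Proof.
move=> h0H.
pose l0 : {ffun 'I_n -> 'I_n} := [ffun j => j].
pose C0 := [set [ffun i => l0 (h i)] | h : 'S_n in H].
have cC0 : is_coset H C0.
  apply/existsP; exists l0; apply/and3P; split.
  - by apply/injectiveP => i j; rewrite !ffunE.
  - by apply/forallP => u; apply/existsP; exists u; rewrite ffunE.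
  - by [].
pose x0 : coset_obj H 'I_n := exist _ C0 cC0.
rewrite /fixcount card_gt0; apply/set0Pn; exists x0; rewrite inE.
apply/eqP/val_inj => /=; rewrite /coset_img /=.
apply/setP => y; apply/imsetP/imsetP.
  move=> [g /imsetP[h hH ->] ->]; exists (h * h0)%g; first exact: groupM.
  by apply/ffunP => i; rewrite !ffunE permM.
move=> [h hH ->]; exists [ffun i => l0 ((h * h0^-1)%g i)].
  by apply/imsetP; exists (h * h0^-1)%g => //; rewrite groupM ?groupV.
by apply/ffunP => i; rewrite !ffunE permM permKV.
Qed.

Lemma fix_conj (s : 'S_n) : 0 < fixcount (Xquot H) s ->
  exists p : 'S_n, exists2 h, h \in H & forall i, s (p i) = p (h i).
Proof.
rewrite /fixcount card_gt0 => /set0Pn[[C pf]]; rewrite inE => /eqP /(congr1 val) /= EC.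
move: (pf) => /existsP[l /and3P[/injectiveP linj _ /eqP EC']].
have lC : l \in C.
  rewrite EC'; apply/imsetP; exists 1%g => //.
  by apply/ffunP => i; rewrite ffunE perm1.
have : [ffun i => s (l i)] \in C.
  by rewrite -[in X in _ \in X]EC; apply/imsetP; exists l.
rewrite EC' => /imsetP[h hH eh].
exists (perm linj); exists h => // i.
by rewrite !permE; move/ffunP: eh => /(_ i); rewrite !ffunE.
Qed.

End Fix.

Section CiCoef.
Local Open Scope ring_scope.
Lemma ci_coef n (F : species) (e : 'X_{1..n.+1}) :
  (cycle_index F n)@_e =
  ((\sum_(s : 'S_n) fixcount F s * (expo s == e))%N)%:R / (n`!)%:R.
Proof.
rewrite /cycle_index raddf_sum /= natr_sum mulr_suml; apply: eq_bigr => s _.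
rewrite mcoeffZ psm_expo mcoeffX natrM mulrAC; congr (_ * _).
Qed.
End CiCoef.

Lemma ci_nat n (F G : species) e :
  cycle_index F n = cycle_index G n ->
  (\sum_(s : 'S_n) fixcount F s * (expo s == e))%N =
  (\sum_(s : 'S_n) fixcount G s * (expo s == e))%N.
Proof.
move=> /(congr1 (mcoeff e)); rewrite !ci_coef => E.
have nz : ((n`!)%:R : rat) != 0%R by rewrite pnatr_eq0 -lt0n fact_gt0.
have := congr1 (fun z => z * (n`!)%:R)%R E; rewrite !mulfVK // => /eqP.
by rewrite eqr_nat => /eqP.
Qed.

Lemma sum_ge (T : finType) (F : T -> nat) x : F x <= \sum_y F y.
Proof. by rewrite (bigD1 x) //= leq_addr. Qed.

Lemma half n l m (Hl Hm : {group 'S_n}) :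
  is_partition n l ->
  (exists2 h0, h0 \in Hl & forall i : 'I_n, val (h0 i) = stdfun l i) ->
  (forall h, h \in Hm -> pres m h) ->
  cycle_index (Xquot Hl) n = cycle_index (Xquot Hm) n ->
  exists2 h, h \in Hm & expo h = eb n l /\ #|blocks n m| <= #|blocks n l|.
Proof.
move=> pl [h0 h0H hf] pm E.
have e0 : expo h0 = eb n l.
  by apply: expo_blocks; apply: porbits_std; [exact: pa_sum pl | exact: hf].
have eAB := ci_nat (expo h0) E.
have Apos : 0 < (\sum_(s : 'S_n) fixcount (Xquot Hl) s * (expo s == expo h0))%N.
  apply: leq_trans (fix_pos h0H) _.
  apply: leq_trans (sum_ge (fun s => fixcount (Xquot Hl) s * (expo s == expo h0))%N h0).
  by rewrite eqxx muln1.
case: (boolP [exists s : 'S_n, (expo s == expo h0) && (0 < fixcount (Xquot Hm) s)]).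
  move=> /existsP[s /andP[/eqP es fs]].
  have [p [h hH ehp]] := fix_conj fs.
  have eh : expo h = eb n l by rewrite -(expo_conj ehp) es.
  exists h; first exact: hH.
  split; first exact: eh.
  rewrite -[#|blocks n l|]mdeg_eb -eh mdeg_expo; exact: blocks_le (pm _ hH).
move=> /existsPn nx.
have : (\sum_(s : 'S_n) fixcount (Xquot Hm) s * (expo s == expo h0))%N = 0.
  apply: big1 => s _.
  have := nx s; case: (expo s == expo h0) => H; last exact: muln0.
  rewrite muln1; move: H; rewrite andTb lt0n negbK => /eqP ->; reflexivity.
by rewrite -eAB => e; rewrite e in Apos.
Qed.

Lemma main_gen n l m (Hl Hm : {group 'S_n}) :
  is_partition n l -> is_partition n m ->
  (forall h, h \in Hl -> pres l h) ->
  (exists2 h0, h0 \in Hl & forall i : 'I_n, val (h0 i) = stdfun l i) ->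
  (forall h, h \in Hm -> pres m h) ->
  (exists2 h0, h0 \in Hm & forall i : 'I_n, val (h0 i) = stdfun m i) ->
  cycle_index (Xquot Hl) n = cycle_index (Xquot Hm) n -> l = m.
Proof.
move=> pl pm prl hl prm hm E.
have [h hH [eh c1]] := half pl hl prm E.
have [_ _ [_ c2]] := half pm hm prl (esym E).
have ph : porbits h = blocks n m.
  apply: blocks_eq; first exact: prm.
  rewrite -mdeg_expo eh mdeg_eb; apply/eqP; rewrite eqn_leq c1 c2.
  done.
apply: eb_eq pl pm _; rewrite -eh; exact: expo_blocks.
Qed.

Section Inst.
Variables (n : nat) (a : seq nat).
Hypothesis pa : is_partition n a.

Lemma young_group_set : group_set (young n a).
Proof.
apply/group_setP; split.
  by rewrite inE; apply/forallP => i; rewrite perm1.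
move=> x y; rewrite !inE => /forallP hx /forallP hy; apply/forallP => i.
by rewrite permM (eqP (hy _)) (eqP (hx _)).
Qed.

Canonical young_group := Group young_group_set.

Lemma young_pres h : h \in young n a -> pres a h.
Proof. by rewrite inE => /forallP hh i; apply/eqP. Qed.

Lemma pres_young h : pres a h -> h \in young n a.
Proof. by move=> hh; rewrite inE; apply/forallP => i; rewrite hh. Qed.

Lemma std_perm_act i : val (std_perm n a i) = stdfun a i.
Proof.
have sa := pa_sum pa.
apply: perm_ofE => [j | j k e].
  have hj : j < sumn a by rewrite sa.
  by have [_] := stdfun_spec hj; rewrite sa.
apply: val_inj; apply: (stdfun_inj _ _ e); by rewrite sa.
Qed.

Lemma std_perm_on_act v i : val (std_perm_on n a v i) = maskf a v i.
Proof.
have sa := pa_sum pa.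
apply: (perm_ofE (f := maskf a v)) => [j | j k e].
  have hj : j < sumn a by rewrite sa.
  by have [_] := maskf_spec v hj; rewrite sa.
apply: val_inj; apply: (maskf_inj _ _ e); by rewrite sa.
Qed.

Lemma std_perm_pres : pres a (std_perm n a).
Proof. apply: (pres_std (pa_sum pa)); exact: std_perm_act. Qed.

Lemma std_perm_on_pres v : pres a (std_perm_on n a v).
Proof.
move=> i; rewrite std_perm_on_act.
have hi : i < sumn a by rewrite (pa_sum pa).
by have [] := maskf_spec v hi.
Qed.

Lemma prod_act (r : seq 'I_n.+1) : uniq r -> forall i : 'I_n,
  val ((\prod_(v <- r) std_perm_on n a v)%g i) =
  if nth 0 a (blk a i) \in map val r then stdfun a i else i.
Proof.
elim: r => [|v r IH] ur i; first by rewrite big_nil perm1.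
move: ur => /= /andP[vr ur].
rewrite big_cons permM IH //.
have hi : i < sumn a by rewrite (pa_sum pa).
have [bx _] := maskf_spec v hi.
rewrite std_perm_on_act bx in_cons.
rewrite /maskf; case: eqP => [e | ne] /=.
  by rewrite e (mem_map val_inj) (negbTE vr).
by case: ifP.
Qed.

Lemma K_h0 : exists2 h0, h0 \in Kgroup n a & forall i : 'I_n, val (h0 i) = stdfun a i.
Proof.
exists (\prod_(v : 'I_n.+1 | val v \in a) std_perm_on n a v)%g.
  apply: group_prod => v va; apply: mem_gen; apply/imsetP; exists v => //.
  by rewrite inE.
move=> i; rewrite -big_filter prod_act; last by rewrite filter_uniq // index_enum_uniq.
have hi : i < sumn a by rewrite (pa_sum pa).
have [b1 _] := blk_spec hi.
have ma : nth 0 a (blk a i) \in a by exact: mem_nth.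
have le : nth 0 a (blk a i) < n.+1 by have := pa_le pa ma; lia.
suff -> : nth 0 a (blk a i) \in map val [seq v <- index_enum 'I_n.+1 | val v \in a] by [].
apply/mapP; exists (Ordinal le) => //.
by rewrite mem_filter /= ma mem_index_enum.
Qed.

Lemma K_pres h : h \in Kgroup n a -> pres a h.
Proof.
move=> hK; apply: young_pres.
have : Kgroup n a \subset young_group.
  rewrite gen_subG; apply/subsetP => x /imsetP[v _ ->].
  apply: pres_young; exact: std_perm_on_pres.
by move/subsetP; apply.
Qed.

Lemma C_pres h : h \in <[std_perm n a]>%g -> pres a h.
Proof. by move=> /cycleP[k ->] i; apply: presX std_perm_pres. Qed.

End Inst.

Lemma iso_Zeq F G : sp_iso F G -> Zeq F G.
Proof.
move=> [a [abij nat]] m; rewrite /cycle_index; apply: eq_bigr => s _.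
suff -> : fixcount F s = fixcount G s by [].
rewrite /fixcount.
have [b ab ba] := abij 'I_m.
have ainj : injective (a 'I_m) := can_inj ab.
suff -> : [set y : sp_obj G 'I_m | sp_tr (perm_bijective s) y == y] =
          a 'I_m @: [set x : sp_obj F 'I_m | sp_tr (perm_bijective s) x == x].
  by rewrite card_imset.
apply/setP => y; rewrite inE; apply/idP/imsetP.
  move=> /eqP hy; exists (b y); last by rewrite ba.
  rewrite inE; apply/eqP; apply: ainj; by rewrite nat ba hy.
move=> [x]; rewrite inE => /eqP hx ->; by rewrite -nat hx.
Qed.

Lemma iso_refl F : sp_iso F F.
Proof. by exists (fun U x => x); split => // U; exists id. Qed.

Lemma fam_thm (Fam : seq nat -> species) n :
  (forall l m, is_partition n l -> is_partition n m -> Zeq (Fam l) (Fam m) -> l = m) ->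
  forall l m, is_partition n l -> is_partition n m ->
  ((sp_iso (Fam l) (Fam m) <-> Zeq (Fam l) (Fam m)) /\ (Zeq (Fam l) (Fam m) <-> l = m)).
Proof.
move=> H l m pl pm; split; split.
- exact: iso_Zeq.
- by move=> /(H _ _ pl pm) ->; exact: iso_refl.
- exact: H.
- by move=> ->.
Qed.

Lemma nc_thm (R : species -> species -> Prop) (Fam : seq nat -> species) n P :
  uniq P -> (forall a, (a \in P) = is_partition n a) ->
  (forall l m, is_partition n l -> is_partition n m -> (R (Fam l) (Fam m) <-> l = m)) ->
  num_classes R (fun i : 'I_(size P) => Fam (nth [::] P i)) (size P).
Proof.
move=> uP mP H.
have pi (i : 'I_(size P)) : is_partition n (nth [::] P i) by rewrite -mP mem_nth.
exists id; split.
  move=> i j /(H _ _ (pi i) (pi j)) e; apply: val_inj.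
  by apply/eqP; rewrite -(nth_uniq [::] (ltn_ord i) (ltn_ord j) uP) e.
move=> j; exists j; exact/(H _ _ (pi j) (pi j)).
Qed.

Lemma E_eq n l m : is_partition n l -> is_partition n m -> Zeq (Esp n l) (Esp n m) -> l = m.
Proof.
move=> pl pm Z.
apply: (main_gen (Hl := young_group n l) (Hm := young_group n m) pl pm).
- by move=> h; exact: young_pres.
- exists (std_perm n l); [apply: pres_young; exact: std_perm_pres pl | exact: std_perm_act pl].
- by move=> h; exact: young_pres.
- exists (std_perm n m); [apply: pres_young; exact: std_perm_pres pm | exact: std_perm_act pm].
- exact: Z n.
Qed.

Lemma C_eq n l m : is_partition n l -> is_partition n m -> Zeq (Csp n l) (Csp n m) -> l = m.
Proof.
move=> pl pm Z.
apply: (main_gen (Hl := (<[std_perm n l]>)%G) (Hm := (<[std_perm n m]>)%G) pl pm).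
- by move=> h; exact: C_pres.
- exists (std_perm n l); [exact: cycle_id | exact: std_perm_act pl].
- by move=> h; exact: C_pres.
- exists (std_perm n m); [exact: cycle_id | exact: std_perm_act pm].
- exact: Z n.
Qed.

Lemma K_eq n l m : is_partition n l -> is_partition n m -> Zeq (Ksp n l) (Ksp n m) -> l = m.
Proof.
move=> pl pm Z.
apply: (main_gen (Hl := [group of <<[set std_perm_on n l (val v) | v : 'I_n.+1 & val v \in l]>>%g])
                 (Hm := [group of <<[set std_perm_on n m (val v) | v : 'I_n.+1 & val v \in m]>>%g]) pl pm).
- by move=> h; exact: K_pres.
- exact: K_h0 pl.
- by move=> h; exact: K_pres.
- exact: K_h0 pm.
- exact: Z n.
Qed.

Unset Implicit Arguments.

Theorem mainTheorem4 (n : nat) :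
  (forall l m : seq nat, is_partition n l -> is_partition n m ->
     [/\ ((sp_iso (Esp n l) (Esp n m) <-> Zeq (Esp n l) (Esp n m)) /\
          (Zeq (Esp n l) (Esp n m) <-> l = m)),
         ((sp_iso (Csp n l) (Csp n m) <-> Zeq (Csp n l) (Csp n m)) /\
          (Zeq (Csp n l) (Csp n m) <-> l = m)) &
         ((sp_iso (Ksp n l) (Ksp n m) <-> Zeq (Ksp n l) (Ksp n m)) /\
          (Zeq (Ksp n l) (Ksp n m) <-> l = m))]) /\
  (forall P : seq (seq nat), uniq P -> (forall a, (a \in P) = is_partition n a) ->
     [/\ num_classes sp_iso (fun i : 'I_(size P) => Esp n (nth [::] P i)) (size P) /\
          num_classes Zeq (fun i : 'I_(size P) => Esp n (nth [::] P i)) (size P),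
         num_classes sp_iso (fun i : 'I_(size P) => Csp n (nth [::] P i)) (size P) /\
          num_classes Zeq (fun i : 'I_(size P) => Csp n (nth [::] P i)) (size P) &
         num_classes sp_iso (fun i : 'I_(size P) => Ksp n (nth [::] P i)) (size P) /\
          num_classes Zeq (fun i : 'I_(size P) => Ksp n (nth [::] P i)) (size P)]).
Proof.
have hE := fam_thm (@E_eq n).
have hC := fam_thm (@C_eq n).
have hK := fam_thm (@K_eq n).
split.
  move=> l m pl pm; split; [exact: hE | exact: hC | exact: hK].
move=> P uP mP; split; split; apply: nc_thm uP mP _ => l m pl pm.
- have [h1 h2] := hE l m pl pm; exact: iff_trans h1 h2.
- exact: (proj2 (hE l m pl pm)).
- have [h1 h2] := hC l m pl pm; exact: iff_trans h1 h2.
- exact: (proj2 (hC l m pl pm)).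
- have [h1 h2] := hK l m pl pm; exact: iff_trans h1 h2.
- exact: (proj2 (hK l m pl pm)).
Qed.
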